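(* Let $\mu,\nu\in\mathbb{R}$ and $\sigma\in\mathbb{R}\setminus\{0\}$. On smooth functions $\Phi(x,t)$ on $\mathbb{R}^2$ define $$P=\partial_x,\quad H=\partial_t,\quad K=-\nu t\,\frac{e^{\sigma\partial_x}-1}{\sigma}-\mu x\,e^{-\sigma\partial_x}\partial_t,\quad D=-x\,\frac{1-e^{-\sigma\partial_x}}{\sigma}-t\partial_t,$$ $$C_1=(\mu x^2e^{-2\sigma\partial_x}+\nu t^2)\partial_t+2\nu xt\,\frac{1-e^{-\sigma\partial_x}}{\sigma}-\sigma\mu x\,e^{-2\sigma\partial_x}\partial_t,$$ $$C_2=-(\mu x^2e^{-\sigma\partial_x}+\nu t^2)\frac{e^{\sigma\partial_x}-1}{\sigma}-2\mu xt\,\partial_t-\sigma\mu(t\partial_t+t^2\partial_t^2),$$ where $e^{a\partial_x}$ is the shift $\Phi(x,t)\mapsto\Phi(x+a,t)$ and $x,t$ denote multiplication operators. Then these operators satisfy the relations $[K,H]=\nu\frac{e^{\sigma P}-1}{\sigma}$, $[K,P]=\mu e^{-\sigma P}H$, $[H,P]=0$, $[K,D]=0$, $[D,H]=H$, $[D,C_1]=-C_1$, $[H,C_1]=-2\nu D$, $[D,P]=\frac{1-e^{-\sigma P}}{\sigma}$, $[D,C_2]=-C_2-\sigma\mu D^2$, $[P,C_2]=2\mu D$, $[K,C_1]=\nu C_2+\sigma\mu\nu D^2$, $[K,C_2]=\mu C_1$, $[P,C_1]=-e^{-\sigma P}K-Ke^{-\sigma P}$, $[H,C_2]=2K+\sigma\mu(DH+HD)$,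 $[C_1,C_2]=-\sigma\mu(DC_1+C_1D)$. Moreover, with $$E_\sigma=\nu\Big(\frac{e^{\sigma\partial_x}-1}{\sigma}\Big)^2-\mu\,\partial_t^2,$$ one has $[E_\sigma,X]=0$ for $X\in\{K,P,H\}$, $[E_\sigma,D]=-2E_\sigma$, $[E_\sigma,C_1]=4\nu t\,E_\sigma$ and $[E_\sigma,C_2]=-4\mu(x+\sigma+\sigma t\partial_t)E_\sigma$. In particular each of these operators maps solutions of $E_\sigma\Phi=0$ to solutions. *)

(* Defs.v *)
From Stdlib Require Import Reals List.
From Coquelicot Require Import Coquelicot.
Open Scope R_scope.

Definition Fun2 := R -> R -> R.
Definition Op := Fun2 -> Fun2.

Definition dX : Op := fun f x t => Derive (fun y => f y t) x.
Definition dT : Op := fun f x t => Derive (fun s => f x s) t.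

Fixpoint iterD (w : list bool) (f : Fun2) : Fun2 :=
  match w with
  | nil => f
  | b :: w' => (if b then dX else dT) (iterD w' f)
  end.

Definition smooth (f : Fun2) : Prop :=
  forall w : list bool, forall x t : R,
    ex_derive (fun y => iterD w f y t) x /\
    ex_derive (fun s => iterD w f x s) t /\
    continuous (fun p : R * R => iterD w f (fst p) (snd p)) (x, t).

Definition idOp : Op := fun f => f.
Definition opadd (A B : Op) : Op := fun f x t => A f x t + B f x t.
Definition opsub (A B : Op) : Op := fun f x t => A f x t - B f x t.
Definition opscal (c : R) (A : Op) : Op := fun f x t => c * A f x t.
Definition opcomp (A B : Op) : Op := fun f => A (B f).
Definition comm (A B : Op) : Op := opsub (opcomp A B) (opcomp B A).

Definition mulX : Op := fun f x t => x * f x t.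
Definition mulT : Op := fun f x t => t * f x t.
Definition shift (a : R) : Op := fun f x t => f (x + a) t.

Section Ops.
Variables (mu nu sigma : R).

Definition DeltaP : Op := opscal (/ sigma) (opsub (shift sigma) idOp).
Definition DeltaM : Op := opscal (/ sigma) (opsub idOp (shift (- sigma))).

Definition Pop : Op := dX.
Definition Hop : Op := dT.

Definition Kop : Op :=
  opsub (opscal (- nu) (opcomp mulT DeltaP))
        (opscal mu (opcomp mulX (opcomp (shift (- sigma)) dT))).

Definition Dop : Op :=
  opsub (opscal (-1) (opcomp mulX DeltaM)) (opcomp mulT dT).

Definition C1op : Op :=
  opsub
    (opadd
      (opcomp (opadd (opscal mu (opcomp mulX (opcomp mulX (shift (-2 * sigma)))))
                     (opscal nu (opcomp mulT mulT))) dT)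
      (opscal (2 * nu) (opcomp mulX (opcomp mulT DeltaM))))
    (opscal (sigma * mu) (opcomp mulX (opcomp (shift (-2 * sigma)) dT))).

Definition C2op : Op :=
  opsub
    (opsub
      (opscal (-1)
        (opcomp (opadd (opscal mu (opcomp mulX (opcomp mulX (shift (- sigma)))))
                       (opscal nu (opcomp mulT mulT))) DeltaP))
      (opscal (2 * mu) (opcomp mulX (opcomp mulT dT))))
    (opscal (sigma * mu)
      (opadd (opcomp mulT dT) (opcomp mulT (opcomp mulT (opcomp dT dT))))).

Definition Eop : Op :=
  opsub (opscal nu (opcomp DeltaP DeltaP)) (opscal mu (opcomp dT dT)).

End Ops.

(* Main.v *)
Require Import Defs.
From Stdlib Require Import Reals List.
From Coquelicot Require Import Coquelicot.
Open Scope R_scope.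
From Stdlib Require Import Lra FunctionalExtensionality.
Require Stdlib.ZArith.ZArith.
Ltac fext := apply functional_extensionality; intro x; apply functional_extensionality; intro t.

Lemma iterD_app w1 w2 f : iterD w1 (iterD w2 f) = iterD (w1 ++ w2) f.
Proof. induction w1 as [|b w1 IH]; simpl; [reflexivity| now rewrite IH]. Qed.

Lemma smooth_iter w f : smooth f -> smooth (iterD w f).
Proof. intros Hs w' x t. rewrite iterD_app. apply Hs. Qed.

Lemma smooth_dX f : smooth f -> smooth (dX f).
Proof. intros Hs. exact (smooth_iter (true::nil) f Hs). Qed.
Lemma smooth_dT f : smooth f -> smooth (dT f).
Proof. intros Hs. exact (smooth_iter (false::nil) f Hs). Qed.

Lemma schwarz f : smooth f -> forall x t, dX (dT f) x t = dT (dX f) x t.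
Proof.
  intros Hs x t. unfold dX, dT.
  apply (Schwarz f x t).
  - apply locally_2d_forall. intros u v.
    split; [exact (proj1 (Hs nil u v))|].
    split; [exact (proj1 (proj2 (Hs nil u v)))|].
    split; [exact (proj1 (Hs (false::nil) u v))|].
    exact (proj1 (proj2 (Hs (true::nil) u v))).
  - apply continuity_2d_pt_filterlim. exact (proj2 (proj2 (Hs (true::false::nil) x t))).
  - apply continuity_2d_pt_filterlim. exact (proj2 (proj2 (Hs (false::true::nil) x t))).
Qed.

Fixpoint itX (m : nat) (f : Fun2) : Fun2 := match m with O => f | S m => dX (itX m f) end.
Fixpoint itT (n : nat) (f : Fun2) : Fun2 := match n with O => f | S n => dT (itT n f) end.
Definition G (Phi : Fun2) (m n : nat) : Fun2 := itX m (itT n Phi).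
Arguments G : simpl never.

Lemma smooth_itT n f : smooth f -> smooth (itT n f).
Proof. induction n; simpl; auto using smooth_dT. Qed.
Lemma smooth_itX n f : smooth f -> smooth (itX n f).
Proof. induction n; simpl; auto using smooth_dX. Qed.
Lemma smooth_G Phi m n : smooth Phi -> smooth (G Phi m n).
Proof. intros; unfold G; auto using smooth_itT, smooth_itX. Qed.

Lemma dT_G Phi m n : smooth Phi -> dT (G Phi m n) = G Phi m (S n).
Proof.
  intros Hs. unfold G. induction m as [|m IH]; simpl in *; [reflexivity|].
  rewrite <- IH. apply functional_extensionality; intro x; apply functional_extensionality; intro t.
  symmetry. apply schwarz. apply smooth_itX, smooth_itT, Hs.
Qed.
Lemma dX_G Phi m n : dX (G Phi m n) = G Phi (S m) n.
Proof. reflexivity. Qed.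


Inductive pol := PC (r : R) | PX | PT | PA (p q : pol) | PM (p q : pol).
Fixpoint evp (p : pol) (x t : R) : R :=
  match p with
  | PC r => r | PX => x | PT => t
  | PA p q => evp p x t + evp q x t
  | PM p q => evp p x t * evp q x t
  end.
Fixpoint dpx (p : pol) : pol :=
  match p with
  | PC _ => PC 0 | PX => PC 1 | PT => PC 0
  | PA p q => PA (dpx p) (dpx q)
  | PM p q => PA (PM (dpx p) q) (PM p (dpx q))
  end.
Fixpoint dpt (p : pol) : pol :=
  match p with
  | PC _ => PC 0 | PX => PC 0 | PT => PC 1
  | PA p q => PA (dpt p) (dpt q)
  | PM p q => PA (PM (dpt p) q) (PM p (dpt q))
  end.
Fixpoint shp (a : R) (p : pol) : pol :=
  match p with
  | PX => PA PX (PC a)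
  | PA p q => PA (shp a p) (shp a q)
  | PM p q => PM (shp a p) (shp a q)
  | q => q
  end.

Lemma exdR_plus (f g : R -> R) x : ex_derive f x -> ex_derive g x -> ex_derive (fun y => f y + g y) x.
Proof. intros H1 H2. exact (ex_derive_plus f g x H1 H2). Qed.

Lemma evp_shp a p x t : evp (shp a p) x t = evp p (x + a) t.
Proof. induction p; simpl; congruence. Qed.

Lemma evp_dT p x t : ex_derive (fun s => evp p x s) t /\ Derive (fun s => evp p x s) t = evp (dpt p) x t.
Proof.
  induction p as [r| | |p IHp q IHq|p IHp q IHq]; simpl.
  - split; [apply ex_derive_const| apply Derive_const].
  - split; [apply ex_derive_const| apply Derive_const].
  - split; [apply ex_derive_id| apply Derive_id].
  - destruct IHp as [E1 D1], IHq as [E2 D2]. split.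
    + apply exdR_plus; assumption.
    + rewrite Derive_plus; auto. rewrite <- D1, <- D2; reflexivity.
  - destruct IHp as [E1 D1], IHq as [E2 D2]. split.
    + apply ex_derive_mult; assumption.
    + rewrite Derive_mult; auto. rewrite <- D1, <- D2; reflexivity.
Qed.

Lemma evp_dX p x t : ex_derive (fun y => evp p y t) x /\ Derive (fun y => evp p y t) x = evp (dpx p) x t.
Proof.
  induction p as [r| | |p IHp q IHq|p IHp q IHq]; simpl.
  - split; [apply ex_derive_const| apply Derive_const].
  - split; [apply ex_derive_id| apply Derive_id].
  - split; [apply ex_derive_const| apply Derive_const].
  - destruct IHp as [E1 D1], IHq as [E2 D2]. split.
    + apply exdR_plus; assumption.
    + rewrite Derive_plus; auto. rewrite <- D1, <- D2; reflexivity.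
  - destruct IHp as [E1 D1], IHq as [E2 D2]. split.
    + apply ex_derive_mult; assumption.
    + rewrite Derive_mult; auto. rewrite <- D1, <- D2; reflexivity.
Qed.


Definition tm := (pol * Z * nat * nat)%type.
Fixpoint ev (Phi : Fun2) (s : R) (l : list tm) : Fun2 :=
  match l with
  | nil => fun _ _ => 0
  | (p, k, m, n) :: l' => fun x t => evp p x t * G Phi m n (x + IZR k * s) t + ev Phi s l' x t
  end.

Fixpoint ldT (l : list tm) : list tm :=
  match l with
  | nil => nil
  | (p, k, m, n) :: l' => (dpt p, k, m, n) :: (p, k, m, S n) :: ldT l'
  end.
Fixpoint ldX (l : list tm) : list tm :=
  match l with
  | nil => nil
  | (p, k, m, n) :: l' => (dpx p, k, m, n) :: (p, k, S m, n) :: ldX l'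
  end.

Lemma shiftD (f : R -> R) c x : ex_derive f (x + c) ->
  ex_derive (fun y => f (y + c)) x /\ Derive (fun y => f (y + c)) x = Derive f (x + c).
Proof.
  intros Hf.
  assert (Hg : ex_derive (fun y => y + c) x) by (auto_derive; auto).
  assert (Dg : Derive (fun y => y + c) x = 1) by (apply is_derive_unique; auto_derive; auto; ring).
  split.
  - apply (ex_derive_comp f (fun y => y + c)); auto.
  - rewrite (Derive_comp f (fun y => y + c)); auto. rewrite Dg; ring.
Qed.

Lemma ev_dT Phi s l : smooth Phi -> forall x t,
  ex_derive (fun u => ev Phi s l x u) t /\ Derive (fun u => ev Phi s l x u) t = ev Phi s (ldT l) x t.
Proof.
  intros Hs x t. induction l as [|[[[p k] m] n] l IH]; simpl.
  - split; [apply ex_derive_const| apply Derive_const].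
  - destruct IH as [E1 D1]. destruct (evp_dT p x t) as [E2 D2].
    assert (E3 : ex_derive (fun u => G Phi m n (x + IZR k * s) u) t)
      by exact (proj1 (proj2 (smooth_G Phi m n Hs nil (x + IZR k * s) t))).
    assert (D3 : Derive (fun u => G Phi m n (x + IZR k * s) u) t = G Phi m (S n) (x + IZR k * s) t).
    { change (dT (G Phi m n) (x + IZR k * s) t = G Phi m (S n) (x + IZR k * s) t).
      rewrite dT_G; auto. }
    split.
    + apply exdR_plus; auto. apply ex_derive_mult; auto.
    + rewrite Derive_plus; auto. 2: apply ex_derive_mult; auto.
      rewrite Derive_mult; auto. rewrite <- D1, <- D2, <- D3, Rplus_assoc; reflexivity.
Qed.

Lemma ev_dX Phi s l : smooth Phi -> forall x t,
  ex_derive (fun u => ev Phi s l u t) x /\ Derive (fun u => ev Phi s l u t) x = ev Phi s (ldX l) x t.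
Proof.
  intros Hs x t. induction l as [|[[[p k] m] n] l IH]; simpl.
  - split; [apply ex_derive_const| apply Derive_const].
  - destruct IH as [E1 D1]. destruct (evp_dX p x t) as [E2 D2].
    destruct (shiftD (fun y => G Phi m n y t) (IZR k * s) x) as [E3 D3].
    { exact (proj1 (smooth_G Phi m n Hs nil (x + IZR k * s) t)). }
    split.
    + apply exdR_plus; auto. apply ex_derive_mult; auto.
    + rewrite Derive_plus; auto. 2: apply ex_derive_mult; auto.
      rewrite Derive_mult; auto. rewrite <- D1, <- D2, D3, Rplus_assoc. reflexivity.
Qed.


Definition lscal (c : R) (l : list tm) : list tm :=
  map (fun '(p, k, m, n) => (PM (PC c) p, k, m, n)) l.
Definition lmulX (l : list tm) : list tm :=
  map (fun '(p, k, m, n) => (PM PX p, k, m, n)) l.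
Definition lmulT (l : list tm) : list tm :=
  map (fun '(p, k, m, n) => (PM PT p, k, m, n)) l.
Definition lsh (s : R) (j : Z) (l : list tm) : list tm :=
  map (fun '(p, k, m, n) => (shp (IZR j * s) p, (k + j)%Z, m, n)) l.

Lemma ev_app Phi s l1 l2 x t : ev Phi s (l1 ++ l2) x t = ev Phi s l1 x t + ev Phi s l2 x t.
Proof. induction l1 as [|[[[p k] m] n] l IH]; simpl; [ring| rewrite IH; ring]. Qed.
Lemma ev_scal Phi s c l x t : ev Phi s (lscal c l) x t = c * ev Phi s l x t.
Proof. induction l as [|[[[p k] m] n] l IH]; simpl in *; [ring| rewrite IH; ring]. Qed.
Lemma ev_mulX Phi s l x t : ev Phi s (lmulX l) x t = x * ev Phi s l x t.
Proof. induction l as [|[[[p k] m] n] l IH]; simpl in *; [ring| rewrite IH; ring]. Qed.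
Lemma ev_mulT Phi s l x t : ev Phi s (lmulT l) x t = t * ev Phi s l x t.
Proof. induction l as [|[[[p k] m] n] l IH]; simpl in *; [ring| rewrite IH; ring]. Qed.
Lemma ev_sh Phi s j l x t : ev Phi s (lsh s j l) x t = ev Phi s l (x + IZR j * s) t.
Proof.
  induction l as [|[[[p k] m] n] l IH]; simpl in *; [ring|].
  rewrite IH, evp_shp, plus_IZR.
  replace (x + (IZR k + IZR j) * s) with (x + IZR j * s + IZR k * s) by ring. reflexivity.
Qed.

Definition rep (Phi : Fun2) (s : R) (O : Op) (L : list tm -> list tm) :=
  forall l, O (ev Phi s l) = ev Phi s (L l).

Definition lid : list tm -> list tm := fun l => l.
Definition ladd (a b : list tm -> list tm) : list tm -> list tm := fun l => a l ++ b l.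
Definition lsub (a b : list tm -> list tm) : list tm -> list tm := fun l => a l ++ lscal (-1) (b l).
Definition lsc (c : R) (a : list tm -> list tm) : list tm -> list tm := fun l => lscal c (a l).
Definition lco (a b : list tm -> list tm) : list tm -> list tm := fun l => a (b l).



Section R.
Lemma rep_id Phi s : rep Phi s idOp lid.
Proof. intro l; reflexivity. Qed.
Lemma rep_add Phi s A B a b : rep Phi s A a -> rep Phi s B b -> rep Phi s (opadd A B) (ladd a b).
Proof. intros HA HB l. unfold opadd, ladd. rewrite HA, HB. fext. now rewrite ev_app. Qed.
Lemma rep_sub Phi s A B a b : rep Phi s A a -> rep Phi s B b -> rep Phi s (opsub A B) (lsub a b).
Proof. intros HA HB l. unfold opsub, lsub. rewrite HA, HB. fext. rewrite ev_app, ev_scal. ring. Qed.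
Lemma rep_scal Phi s c A a : rep Phi s A a -> rep Phi s (opscal c A) (lsc c a).
Proof. intros HA l. unfold opscal, lsc. rewrite HA. fext. now rewrite ev_scal. Qed.
Lemma rep_comp Phi s A B a b : rep Phi s A a -> rep Phi s B b -> rep Phi s (opcomp A B) (lco a b).
Proof. intros HA HB l. unfold opcomp, lco. now rewrite HB, HA. Qed.
Lemma rep_mulX Phi s : rep Phi s mulX lmulX.
Proof. intros l. unfold mulX. fext. now rewrite ev_mulX. Qed.
Lemma rep_mulT Phi s : rep Phi s mulT lmulT.
Proof. intros l. unfold mulT. fext. now rewrite ev_mulT. Qed.
Lemma rep_shift Phi s a j : a = IZR j * s -> rep Phi s (shift a) (lsh s j).
Proof. intros Ha l. unfold shift. fext. now rewrite ev_sh, Ha. Qed.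
Lemma rep_dT Phi s : smooth Phi -> rep Phi s dT ldT.
Proof. intros Hs l. unfold dT. fext. exact (proj2 (ev_dT Phi s l Hs x t)). Qed.
Lemma rep_dX Phi s : smooth Phi -> rep Phi s dX ldX.
Proof. intros Hs l. unfold dX. fext. exact (proj2 (ev_dX Phi s l Hs x t)). Qed.
End R.

Definition lDP s := lsc (/ s) (lsub (lsh s 1) lid).
Definition lDM s := lsc (/ s) (lsub lid (lsh s (-1))).
Definition lK mu nu s :=
  lsub (lsc (- nu) (lco lmulT (lDP s))) (lsc mu (lco lmulX (lco (lsh s (-1)) ldT))).
Definition lD s := lsub (lsc (-1) (lco lmulX (lDM s))) (lco lmulT ldT).
Definition lC1 mu nu s :=
  lsub (ladd (lco (ladd (lsc mu (lco lmulX (lco lmulX (lsh s (-2))))) (lsc nu (lco lmulT lmulT))) ldT)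
             (lsc (2 * nu) (lco lmulX (lco lmulT (lDM s)))))
       (lsc (s * mu) (lco lmulX (lco (lsh s (-2)) ldT))).
Definition lC2 mu nu s :=
  lsub (lsub (lsc (-1) (lco (ladd (lsc mu (lco lmulX (lco lmulX (lsh s (-1))))) (lsc nu (lco lmulT lmulT))) (lDP s)))
             (lsc (2 * mu) (lco lmulX (lco lmulT ldT))))
       (lsc (s * mu) (ladd (lco lmulT ldT) (lco lmulT (lco lmulT (lco ldT ldT))))).
Definition lE mu nu s := lsub (lsc nu (lco (lDP s) (lDP s))) (lsc mu (lco ldT ldT)).

Ltac rep_step Hs :=
  match goal with
  | |- rep _ _ (opadd _ _) _ => apply rep_add
  | |- rep _ _ (opsub _ _) _ => apply rep_sub
  | |- rep _ _ (opscal _ _) _ => apply rep_scal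
  | |- rep _ _ (opcomp _ _) _ => apply rep_comp
  | |- rep _ _ (comm _ _) _ => unfold comm; apply rep_sub
  | |- rep _ _ idOp _ => apply rep_id
  | |- rep _ _ mulX _ => apply rep_mulX
  | |- rep _ _ mulT _ => apply rep_mulT
  | |- rep _ _ dT _ => apply (rep_dT _ _ Hs)
  | |- rep _ _ dX _ => apply (rep_dX _ _ Hs)
  | |- rep _ _ (Defs.shift (- _)) _ => apply (rep_shift _ _ _ (-1)%Z); ring
  | |- rep _ _ (Defs.shift _) _ => apply rep_shift; ring
  end.
Ltac rep_base Hs := repeat (rep_step Hs).
Lemma rep_DP Phi s : rep Phi s (DeltaP s) (lDP s).
Proof. unfold DeltaP, lDP. rep_base I. Qed.
Lemma rep_DM Phi s : rep Phi s (DeltaM s) (lDM s).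
Proof. unfold DeltaM, lDM. rep_base I. Qed.
Lemma rep_K Phi mu nu s : smooth Phi -> rep Phi s (Kop mu nu s) (lK mu nu s).
Proof. intro Hs. unfold Kop, lK. rep_base Hs; apply rep_DP. Qed.
Lemma rep_D Phi s : smooth Phi -> rep Phi s (Dop s) (lD s).
Proof. intro Hs. unfold Dop, lD. rep_base Hs; apply rep_DM. Qed.
Lemma rep_C1 Phi mu nu s : smooth Phi -> rep Phi s (C1op mu nu s) (lC1 mu nu s).
Proof. intro Hs. unfold C1op, lC1. rep_base Hs; apply rep_DM. Qed.
Lemma rep_C2 Phi mu nu s : smooth Phi -> rep Phi s (C2op mu nu s) (lC2 mu nu s).
Proof. intro Hs. unfold C2op, lC2. rep_base Hs; apply rep_DP. Qed.
Lemma rep_E Phi mu nu s : smooth Phi -> rep Phi s (Eop mu nu s) (lE mu nu s).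
Proof. intro Hs. unfold Eop, lE. rep_base Hs; apply rep_DP. Qed.


Definition l0 : list tm := (PC 1, 0%Z, 0%nat, 0%nat) :: nil.
Lemma ev_l0 Phi s : ev Phi s l0 = Phi.
Proof. fext. simpl. unfold G; simpl. replace (x + 0 * s) with x by ring. ring. Qed.

Lemma by_rep Phi s A B a b : rep Phi s A a -> rep Phi s B b ->
  (forall x t, ev Phi s (a l0) x t = ev Phi s (b l0) x t) -> A Phi = B Phi.
Proof.
  intros HA HB He. rewrite <- (ev_l0 Phi s) at 1 2. rewrite HA, HB. fext. apply He.
Qed.
Lemma by_rep0 Phi s A a : rep Phi s A a ->
  (forall x t, ev Phi s (a l0) x t = 0) -> A Phi = (fun _ _ => 0).
Proof.
  intros HA He. rewrite <- (ev_l0 Phi s) at 1. rewrite HA. fext. apply He.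
Qed.

Ltac rep_all Hs :=
  repeat (match goal with
  | |- rep _ _ (Kop _ _ _) _ => apply (rep_K _ _ _ _ Hs)
  | |- rep _ _ (Dop _) _ => apply (rep_D _ _ Hs)
  | |- rep _ _ (C1op _ _ _) _ => apply (rep_C1 _ _ _ _ Hs)
  | |- rep _ _ (C2op _ _ _) _ => apply (rep_C2 _ _ _ _ Hs)
  | |- rep _ _ (Eop _ _ _) _ => apply (rep_E _ _ _ _ Hs)
  | |- rep _ _ (DeltaP _) _ => apply rep_DP
  | |- rep _ _ (DeltaM _) _ => apply rep_DM
  | |- rep _ _ Pop _ => apply (rep_dX _ _ Hs)
  | |- rep _ _ Hop _ => apply (rep_dT _ _ Hs)
  | _ => rep_step Hs
  end).

Ltac compute_ev :=
  cbv [lK lD lC1 lC2 lE lDP lDM ladd lsub lsc lco lid l0]; simpl.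

Ltac solve_id Hs hs :=
  let sg := match type of hs with ?a <> 0 => a end in
  first [ eapply (by_rep0 _ sg); [rep_all Hs | intros x t; compute_ev; field; exact hs]
        | eapply (by_rep _ sg); [rep_all Hs | rep_all Hs | intros x t; compute_ev; field; exact hs] ].



Lemma zero_rep Phi s A a : rep Phi s A a -> a nil = nil -> A (fun _ _ => 0) = (fun _ _ => 0).
Proof. intros HA Ha. change (fun _ _ : R => 0) with (ev Phi s nil). rewrite HA, Ha. reflexivity. Qed.

Theorem mainTheorem5 (mu nu sigma : R) (hsigma : sigma <> 0) :
  let P := Pop in
  let H := Hop in
  let K := Kop mu nu sigma in
  let D := Dop sigma in
  let C1 := C1op mu nu sigma in
  let C2 := C2op mu nu sigma in
  let E := Eop mu nu sigma in
  let emP := shift (- sigma) in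
  (forall Phi : Fun2, smooth Phi ->
     comm K H Phi = opscal nu (DeltaP sigma) Phi /\
     comm K P Phi = opscal mu (opcomp emP H) Phi /\
     comm H P Phi = (fun _ _ => 0) /\
     comm K D Phi = (fun _ _ => 0) /\
     comm D H Phi = H Phi /\
     comm D C1 Phi = opscal (-1) C1 Phi /\
     comm H C1 Phi = opscal (-2 * nu) D Phi /\
     comm D P Phi = DeltaM sigma Phi /\
     comm D C2 Phi = opsub (opscal (-1) C2) (opscal (sigma * mu) (opcomp D D)) Phi /\
     comm P C2 Phi = opscal (2 * mu) D Phi /\
     comm K C1 Phi = opadd (opscal nu C2) (opscal (sigma * mu * nu) (opcomp D D)) Phi /\
     comm K C2 Phi = opscal mu C1 Phi /\
     comm P C1 Phi = opsub (opscal (-1) (opcomp emP K)) (opcomp K emP) Phi /\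
     comm H C2 Phi = opadd (opscal 2 K)
                       (opscal (sigma * mu) (opadd (opcomp D H) (opcomp H D))) Phi /\
     comm C1 C2 Phi = opscal (- (sigma * mu)) (opadd (opcomp D C1) (opcomp C1 D)) Phi /\
     comm E K Phi = (fun _ _ => 0) /\
     comm E P Phi = (fun _ _ => 0) /\
     comm E H Phi = (fun _ _ => 0) /\
     comm E D Phi = opscal (-2) E Phi /\
     comm E C1 Phi = opscal (4 * nu) (opcomp mulT E) Phi /\
     comm E C2 Phi =
       opscal (-4 * mu)
         (opcomp (opadd (opadd mulX (opscal sigma idOp))
                        (opscal sigma (opcomp mulT dT))) E) Phi) /\
  (forall Phi : Fun2, smooth Phi -> E Phi = (fun _ _ => 0) ->
     forall X : Op, In X (K :: P :: H :: D :: C1 :: C2 :: nil) ->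
       E (X Phi) = (fun _ _ => 0)).
Proof.
  cbv zeta. split.
  - intros Phi Hs.
    repeat match goal with |- _ /\ _ => split end; solve_id Hs hsigma.
  - intros Phi Hs HE X HX.
    assert (P1 : comm (Eop mu nu sigma) (Kop mu nu sigma) Phi = (fun _ _ => 0) /\
                 comm (Eop mu nu sigma) Pop Phi = (fun _ _ => 0) /\
                 comm (Eop mu nu sigma) Hop Phi = (fun _ _ => 0) /\
                 comm (Eop mu nu sigma) (Dop sigma) Phi = opscal (-2) (Eop mu nu sigma) Phi /\
                 comm (Eop mu nu sigma) (C1op mu nu sigma) Phi = opscal (4 * nu) (opcomp mulT (Eop mu nu sigma)) Phi /\
                 comm (Eop mu nu sigma) (C2op mu nu sigma) Phi =
                   opscal (-4 * mu)
                     (opcomp (opadd (opadd mulX (opscal sigma idOp))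
                        (opscal sigma (opcomp mulT dT))) (Eop mu nu sigma)) Phi).
    { repeat match goal with |- _ /\ _ => split end; solve_id Hs hsigma. }
    destruct P1 as [EK [EP [EH [ED [EC1 EC2]]]]].
    assert (Hc : forall A x t, Eop mu nu sigma (A Phi) x t =
                   comm (Eop mu nu sigma) A Phi x t + A (Eop mu nu sigma Phi) x t)
      by (intros; unfold comm, opsub, opcomp; ring).
    simpl in HX.
    destruct HX as [<-|[<-|[<-|[<-|[<-|[<-|[]]]]]]]; fext; rewrite Hc, HE.
    + rewrite EK. rewrite (zero_rep Phi sigma _ _ (rep_K Phi mu nu sigma Hs)); [ring| reflexivity].
    + rewrite EP. rewrite (zero_rep Phi sigma Pop _ (rep_dX Phi sigma Hs)); [ring| reflexivity].
    + rewrite EH. rewrite (zero_rep Phi sigma Hop _ (rep_dT Phi sigma Hs)); [ring| reflexivity].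
    + rewrite ED. unfold opscal. rewrite HE.
      rewrite (zero_rep Phi sigma _ _ (rep_D Phi sigma Hs)); [ring| reflexivity].
    + rewrite EC1. unfold opscal, opcomp. rewrite HE.
      rewrite (zero_rep Phi sigma _ _ (rep_C1 Phi mu nu sigma Hs)); [|reflexivity].
      unfold mulT. ring.
    + rewrite EC2. unfold opscal at 1. unfold opcomp at 1. rewrite HE.
      rewrite (zero_rep Phi sigma _ _ (rep_C2 Phi mu nu sigma Hs)); [|reflexivity].
      assert (Z : opadd (opadd mulX (opscal sigma idOp)) (opscal sigma (opcomp mulT dT)) (fun _ _ => 0)
                  = (fun _ _ => 0)) by (eapply (zero_rep Phi sigma); [rep_all Hs | reflexivity]).
      rewrite Z. ring.
Qed.
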